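(* Let $G=(V,E)$ be an undirected graph with $n=|V|$ nodes, and let $L_0 \subseteq V$ be any set of nodes, with $L_1$, $L_2$, $L_{\geq 2}$, $d^+(L_0)$, the reaching attempt, $rs(v)$ and the procedure Sample defined as in the context. Suppose the estimate $\bar\ell_{\geq 2}$ used by Sample satisfies $\bar\ell_{\geq 2} \in [(1-\delta)|L_{\geq 2}|, (1+\delta)|L_{\geq 2}|]$, and that the baseline reachability $rs_0$ used by Sample is the $\varepsilon$-th percentile of the reachability distribution over $L_{\geq 2}$, i.e., at least a $(1-\varepsilon)$ fraction of the nodes $v \in L_{\geq 2}$ satisfy $rs(v) \ge rs_0$. Then the distribution of the node output by Sample is $(\varepsilon + \delta + O((\varepsilon+\delta)^2))$-close to the uniform distribution on $V$ in total variation distance. Furthermore, every node of $G$ is output by Sample with probability at most $(1 + \varepsilon + \delta + O((\varepsilon+\delta)^2))/n$.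
   Context: Layers: given $L_0 \subseteq V$, let $L_1 = \bigcup_{v\in L_0} N(v) \setminus L_0$ (where $N(v)$ is the neighbor set of $v$), let $L_2$ be the set of nodes at distance exactly $2$ from $L_0$, and let $L_{\geq 2} = V \setminus (L_0 \cup L_1)$. Let $G_{\geq 2}$ be the graph with node set $L_{\geq 2}$ whose edges are the edges of $G$ between $L_2$ and $L_{\geq 2}\setminus L_2$ and the edges of $G$ with both endpoints in $L_{\geq 2}\setminus L_2$ (edges with both endpoints in $L_2$ are excluded); for $v \in L_{\geq 2}$, $C(v)$ denotes the connected component of $G_{\geq 2}$ containing $v$. Let $d^+(L_0)$ denote the number of edges between $L_0$ and $L_1$. A single reaching attempt does the following: pick a uniformly random edge between $L_0$ and $L_1$, let $u$ be its $L_1$-endpoint; if $u$ has no neighbor in $L_2$ the attempt fails; otherwise pick a random neighbor $v\in L_2$ of $u$, compute the component $C(v)$ (by BFS), and output a uniformly random node $w \in C(v)$. The procedure Reach repeats attempts until one succeeds and returns its output node together with its reachability score. For $v \in L_{\geq 2}$, the reachability score $rs(v)$ is the value such that a single attempt outputs (reaches) $v$ with probability $rs(v)/d^+(L_0)$. Procedure Sample (with inputs $\bar\ell_{\geq 2}$ and $rs_0>0$): let $\bar n = |L_0| + |L_1| + \bar\ell_{\geq 2}$; with probability $|L_0|/\bar n$ output a uniformly random node of $L_0$; with probability $|L_1|/\bar n$ output a uniformly random node of $L_1$; otherwise repeat: call Reach to get a node $w \in L_{\geq 2}$ and $rs(w)$, and accept and output $w$ with probability $\min(1, rs_0/rs(w))$,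 else repeat. *)

(* Defs.v *)
(* finite graphs as symmetric irreflexive relations on a finType,
   probabilities as values in an arbitrary real field R. *)
From HB Require Import structures.
From mathcomp Require Import all_boot all_order all_algebra.
Set Implicit Arguments. Unset Strict Implicit. Unset Printing Implicit Defensive.
Import Order.TTheory GRing.Theory Num.Theory.
Local Open Scope ring_scope.

Section Layers.
Variables (R : realFieldType) (T : finType) (e : rel T) (L0 : {set T}).

Definition nbr (v : T) : {set T} := [set u | e v u].

Definition L1 : {set T} := (\bigcup_(v in L0) nbr v) :\: L0.

Definition L2 : {set T} :=
  [set w | (w \notin L0 :|: L1) && [exists u in L1, e u w]].

Definition Lge2 : {set T} := ~: (L0 :|: L1).

Definition e2 : rel T := fun x y =>
  [&& e x y, x \in Lge2, y \in Lge2 & ~~ ((x \in L2) && (y \in L2))].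

Definition comp (v : T) : {set T} := [set w | connect e2 v w].

Definition bnd_edges : {set T * T} :=
  [set p | [&& p.1 \in L0, p.2 \in L1 & e p.1 p.2]].

Definition dplus : nat := #|bnd_edges|.

Definition nbr2 (u : T) : {set T} := nbr u :&: L2.

(* probability that a single reaching attempt outputs w:
   uniform edge (x,u) between L0 and L1; uniform L2-neighbor v of u (fail if none);
   uniform node of C(v). *)
Definition attempt_prob (w : T) : R :=
  \sum_(p in bnd_edges) (dplus%:R)^-1 *
    \sum_(v in nbr2 p.2)
       (#|nbr2 p.2|%:R)^-1 * ((w \in comp v)%:R * (#|comp v|%:R)^-1).

(* reachability score: a single attempt reaches v w.p. rs(v)/d^+(L0) *)
Definition rs (v : T) : R := dplus%:R * attempt_prob v.

(* Output distribution of "repeat independent trials until one succeeds",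
   where a single trial succeeds with output w with probability f w:
   the output is w with probability f w / (sum_v f v). *)
Definition repeat_until (f : T -> R) (w : T) : R := f w / \sum_v f v.

Definition reach_prob (w : T) : R := repeat_until attempt_prob w.

Definition sample_prob (lbar rs0 : R) (w : T) : R :=
  let nbar := #|L0|%:R + #|L1|%:R + lbar in
  (w \in L0)%:R * ((#|L0|%:R / nbar) * (#|L0|%:R)^-1)
  + (w \in L1)%:R * ((#|L1|%:R / nbar) * (#|L1|%:R)^-1)
  + (1 - #|L0|%:R / nbar - #|L1|%:R / nbar) *
      repeat_until (fun x => reach_prob x * Num.min 1 (rs0 / rs x)) w.

End Layers.

Definition tv_uniform (R : realFieldType) (T : finType) (p : T -> R) : R :=
  2^-1 * \sum_(v : T) `|p v - (#|T|%:R)^-1|.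

(* Main.v *)
Require Import Defs.
From HB Require Import structures.
From mathcomp Require Import all_boot all_order all_algebra.
From mathcomp Require Import ring lra.
Set Implicit Arguments. Unset Strict Implicit. Unset Printing Implicit Defensive.
Import Order.TTheory GRing.Theory Num.Theory.
Local Open Scope ring_scope.

Section H.
Variables (R : realFieldType) (T : finType) (e : rel T) (L0 : {set T}).

Lemma L2_sub v : v \in L2 e L0 -> v \in Lge2 e L0.
Proof. by rewrite /L2 /Lge2 !inE => /andP[]. Qed.

Lemma comp_sub v x : v \in Lge2 e L0 -> x \in Defs.comp e L0 v -> x \in Lge2 e L0.
Proof.
move=> hv; rewrite inE => /connectP [p hp ->].
elim/last_ind: p hp => [//|p y _].
by rewrite rcons_path last_rcons => /andP [_ /and4P[_ _ ? _]].
Qed.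

Lemma att_ge0 x : 0 <= attempt_prob R e L0 x.
Proof.
apply: sumr_ge0 => p _; apply: mulr_ge0; first by rewrite invr_ge0.
apply: sumr_ge0 => v _; apply: mulr_ge0; first by rewrite invr_ge0.
by apply: mulr_ge0; rewrite ?invr_ge0.
Qed.

Lemma att_supp x : x \notin Lge2 e L0 -> attempt_prob R e L0 x = 0.
Proof.
move=> hx; apply: big1 => p _; apply/eqP; rewrite mulf_eq0; apply/orP; right.
apply/eqP; apply: big1 => v; rewrite inE => /andP[_ /L2_sub hv].
have -> : (x \in Defs.comp e L0 v) = false.
  by apply/negP => /(comp_sub hv); apply/negP.
by rewrite !mul0r mulr0.
Qed.

Variable rs0 : R.
Hypothesis hr0 : 0 < rs0.

Definition A := \sum_v attempt_prob R e L0 v.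
Definition D : R := (dplus e L0)%:R.
Definition f x := reach_prob R e L0 x * Num.min 1 (rs0 / rs R e L0 x).
Definition G := [set v in Lge2 e L0 | rs0 <= rs R e L0 v].
Definition kap := rs0 / (D * A).

Lemma A_ge0 : 0 <= A.
Proof. by apply: sumr_ge0 => v _; apply: att_ge0. Qed.

Lemma rsE x : rs R e L0 x = D * attempt_prob R e L0 x.
Proof. by []. Qed.

Lemma f_ge0 x : 0 <= f x.
Proof.
rewrite /f /reach_prob /repeat_until; apply: mulr_ge0.
  by apply: mulr_ge0; [apply: att_ge0| rewrite invr_ge0 A_ge0].
rewrite le_min ler01 /=; apply: mulr_ge0; first exact: ltW.
by rewrite invr_ge0 rsE; apply: mulr_ge0; [rewrite /D ler0n | apply: att_ge0].
Qed.

Lemma f_supp x : x \notin Lge2 e L0 -> f x = 0.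
Proof. by move=> hx; rewrite /f /reach_prob /repeat_until att_supp // !mul0r. Qed.

Section Gne.
Variable x0 : T.
Hypothesis hx0 : x0 \in G.

Lemma DA_pos : 0 < D /\ 0 < A.
Proof.
move: hx0; rewrite inE => /andP[_ h].
have hpos : 0 < D * attempt_prob R e L0 x0 by rewrite -rsE; exact: lt_le_trans h.
have hD : 0 <= D by rewrite /D ler0n.
have ha := att_ge0 x0.
have hD' : 0 < D.
  rewrite lt_def hD andbT; apply/eqP => E; move: hpos; by rewrite E mul0r ltxx.
have ha' : 0 < attempt_prob R e L0 x0.
  rewrite lt_def ha andbT; apply/eqP => E; move: hpos; by rewrite E mulr0 ltxx.
split => //; apply: lt_le_trans ha' _.
rewrite /A (bigD1 x0) //= lerDl; apply: sumr_ge0 => v _; exact: att_ge0.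
Qed.

Lemma kap_pos : 0 < kap.
Proof. case: DA_pos => hD hA; rewrite /kap; apply: divr_gt0 => //; exact: mulr_gt0. Qed.

Lemma f_le x : f x <= kap.
Proof.
case: DA_pos => hD hA.
have ha := att_ge0 x.
rewrite /f /reach_prob /repeat_until -/A.
have [E|nE] := eqVneq (attempt_prob R e L0 x) 0.
  by rewrite E mul0r mul0r; apply: ltW; apply: kap_pos.
apply: le_trans (_ : attempt_prob R e L0 x / A * (rs0 / rs R e L0 x) <= kap).
  apply: ler_wpM2l; first by apply: mulr_ge0 => //; rewrite invr_ge0 ltW.
  by rewrite ge_min lexx orbT.
rewrite rsE /kap le_eqVlt; apply/orP; left; apply/eqP; field.
by rewrite nE /= gt_eqF //= gt_eqF.
Qed.

Lemma f_G x : x \in G -> f x = kap.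
Proof.
case: DA_pos => hD hA.
rewrite inE => /andP[_ h].
have hrs : 0 < rs R e L0 x by exact: lt_le_trans h.
have nE : attempt_prob R e L0 x != 0.
  apply/eqP => E; move: hrs; by rewrite rsE E mulr0 ltxx.
rewrite /f min_r; last by rewrite ler_pdivrMr // mul1r.
rewrite /reach_prob /repeat_until -/A rsE /kap; field.
by rewrite nE /= gt_eqF //= gt_eqF.
Qed.

Lemma F_ge : #|G|%:R * kap <= \sum_v f v.
Proof.
rewrite (bigID (fun v => v \in G)) /=.
have h1 : \sum_(v in G) f v = #|G|%:R * kap.
  rewrite (eq_bigr (fun _ => kap)); last by move=> v; apply: f_G.
  by rewrite sumr_const mulr_natl.
have h2 : 0 <= \sum_(v | v \notin G) f v by apply: sumr_ge0 => v _; apply: f_ge0.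
rewrite h1; lra.
Qed.
Lemma g_pos : 0 < (#|G|%:R : R).
Proof. by rewrite ltr0n; apply/card_gt0P; exists x0. Qed.

Lemma F_pos : 0 < \sum_v f v.
Proof. apply: lt_le_trans (F_ge); apply: mulr_gt0; [exact: g_pos | exact: kap_pos]. Qed.

Lemma q_le w : f w / \sum_v f v <= (#|G|%:R)^-1.
Proof.
have hg := g_pos; have hF := F_pos.
rewrite ler_pdivrMr //.
apply: le_trans (f_le w) _.
rewrite -(ler_pM2l hg) [X in _ <= X]mulrA mulfV ?mul1r; [exact: F_ge | by rewrite gt_eqF].
Qed.

Lemma q_sum : \sum_w f w / \sum_v f v = 1.
Proof. by rewrite -mulr_suml mulfV // gt_eqF // F_pos. Qed.
End Gne.

Lemma q_ge0 w : 0 <= f w / \sum_v f v.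
Proof. by apply: divr_ge0; [apply: f_ge0 | apply: sumr_ge0 => v _; apply: f_ge0]. Qed.

Lemma q_supp w : w \notin Lge2 e L0 -> f w / \sum_v f v = 0.
Proof. by move=> h; rewrite f_supp // mul0r. Qed.

Lemma sampleE lbar w :
  sample_prob e L0 lbar rs0 w =
  let N := #|L0|%:R + #|L1 e L0|%:R + lbar in
  (w \in L0)%:R * ((#|L0|%:R / N) * (#|L0|%:R)^-1)
  + (w \in L1 e L0)%:R * ((#|L1 e L0|%:R / N) * (#|L1 e L0|%:R)^-1)
  + (1 - #|L0|%:R / N - #|L1 e L0|%:R / N) * (f w / \sum_v f v).
Proof. by []. Qed.
End H.

Unset Implicit Arguments.
Lemma aux_div (R : realFieldType) (x y : R) : x * (x / y * x^-1) = x / y.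
Proof.
have [->|nx] := eqVneq x 0; first by rewrite !mul0r.
by rewrite [x / y * _]mulrAC mulfV ?mul1r.
Qed.

Lemma aux_sum (R : realFieldType) (T : finType) (S : {set T}) (c : R) :
  \sum_w (w \in S)%:R * c = #|S|%:R * c.
Proof.
rewrite (eq_bigr (fun w => if w \in S then c else 0)); last first.
  by move=> w _; case: (w \in S); rewrite ?mul1r ?mul0r.
by rewrite -big_mkcond sumr_const mulr_natl.
Qed.

Theorem theorem3p1 (R : realFieldType) :
  exists (C c0 : R), 0 < c0 /\
  forall (T : finType) (e : rel T), symmetric e -> irreflexive e ->
  forall (L0 : {set T}) (eps delta lbar rs0 : R),
    0 <= eps -> 0 <= delta -> eps + delta <= c0 ->
    (1 - delta) * #|Lge2 e L0|%:R <= lbar ->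
    lbar <= (1 + delta) * #|Lge2 e L0|%:R ->
    0 < rs0 ->
    (1 - eps) * #|Lge2 e L0|%:R
      <= #|[set v in Lge2 e L0 | rs0 <= rs R e L0 v]|%:R ->
    tv_uniform (sample_prob e L0 lbar rs0)
      <= eps + delta + C * (eps + delta) ^+ 2
    /\ forall w : T,
         sample_prob e L0 lbar rs0 w
           <= (1 + eps + delta + C * (eps + delta) ^+ 2) / #|T|%:R.
Proof.
exists 2, (2^-1); split; first by rewrite invr_gt0.
move=> T e _ _ L0 eps delta lbar rs0 he hd hs hl1 hl2 hr0 hG.
have hs' : eps + delta <= 1/2 by rewrite mul1r.
have hcard : (#|L0| + #|L1 e L0| + #|Lge2 e L0|)%N = #|T|.
  rewrite -(cardsC (L0 :|: L1 e L0)) -cardsUI.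
  have -> : L0 :&: L1 e L0 = set0.
    by apply/setP => x; rewrite /L1 !inE; case: (x \in L0); rewrite ?andbF.
  by rewrite cards0 addn0.
set a : R := #|L0|%:R; set b : R := #|L1 e L0|%:R; set m : R := #|Lge2 e L0|%:R.
set n : R := #|T|%:R.
have hn : n = a + b + m by rewrite /n -hcard !natrD.
have ha0 : 0 <= a by rewrite ler0n.
have hb0 : 0 <= b by rewrite ler0n.
have hm0 : 0 <= m by rewrite ler0n.
set g : R := #|G e L0 rs0|%:R.
have hg : (1 - eps) * m <= g by [].
have hlb0 : 0 <= lbar.
  have : 0 <= (1 - delta) * m by apply: mulr_ge0 => //; lra.
  lra.
have h12 : 0 <= 1 - 2 * (eps + delta) by lra.
have hsd : 0 <= (eps + delta) * delta by apply: mulr_ge0; lra.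
have hse : 0 <= (eps + delta) * eps by apply: mulr_ge0; lra.
have hsd2 : 0 <= (eps + delta) * delta * (1 - 2 * (eps + delta)) by apply: mulr_ge0.
have hse2 : 0 <= (eps + delta) * eps * (1 - 2 * (eps + delta)) by apply: mulr_ge0.
set B := 1 + eps + delta + 2 * (eps + delta) ^+ 2.
set N := a + b + lbar.
have hBd : 1 <= B * (1 - delta) by rewrite /B; lra.
have hBe : 1 + delta <= B * (1 - eps) by rewrite /B; lra.
have hpt : forall w, sample_prob e L0 lbar rs0 w <= B / n.
  move=> w.
  have hn0 : 0 < n by rewrite ltr0n; apply/card_gt0P; exists w.
  have hdab : 0 <= delta * (a + b) by apply: mulr_ge0; lra.
  have hN : (1 - delta) * n <= N by rewrite /N hn; lra.
  have hN0 : 0 < N.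
    have : 0 < (1 - delta) * n by apply: mulr_gt0 => //; lra.
    lra.
  rewrite sampleE /= -/a -/b -/N.
  have -> : 1 - a / N - b / N = lbar / N by rewrite /N; field; rewrite gt_eqF.
  have h1N : N^-1 <= B / n.
    rewrite ler_pdivlMr // mulrC ler_pdivrMr //.
    have hB0 : 0 <= B by rewrite /B; have := sqr_ge0 (eps + delta); lra.
    have u1 : B * ((1 - delta) * n) <= B * N by apply: ler_wpM2l.
    have u2 : 1 * n <= B * (1 - delta) * n by apply: ler_wpM2r => //; lra.
    lra.
  case hw0 : (w \in L0).
    have hw1 : (w \in L1 e L0) = false by rewrite /L1 !inE hw0.
    rewrite hw1 q_supp; last by rewrite /Lge2 !inE hw0.
    have ha : a != 0 by rewrite pnatr_eq0 -lt0n; apply/card_gt0P; exists w.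
    by rewrite mul1r mul0r mulr0 !addr0 mulrAC mulfV // mul1r.
  case hw1 : (w \in L1 e L0).
    rewrite q_supp; last by rewrite /Lge2 in_setC in_setU hw0 hw1.
    have hb : b != 0 by rewrite pnatr_eq0 -lt0n; apply/card_gt0P; exists w.
    by rewrite mul1r mul0r mulr0 !add0r addr0 mulrAC mulfV // mul1r.
  have hwl : w \in Lge2 e L0 by rewrite /Lge2 in_setC in_setU hw0 hw1.
  rewrite !mul0r !add0r.
  have hm : 0 < m by rewrite ltr0n; apply/card_gt0P; exists w.
  have hgp : 0 < g by nra.
  have [x0 hx0] : exists x0, x0 \in G e L0 rs0.
    by apply/card_gt0P; rewrite -(ltr0n R).
  have hq := q_le hr0 hx0 w.
  have hq0 := q_ge0 e L0 hr0 w.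
  apply: le_trans (_ : lbar / N * g^-1 <= _).
    by apply: ler_wpM2l => //; apply: divr_ge0 => //; apply: ltW.
  have k1 : lbar * n <= (1 + delta) * m * N by rewrite hn /N; nra.
  have k3 : (1 + delta) * m <= B * g by nra.
  rewrite -mulrA -invfM ler_pdivrMr ?mulr_gt0 // mulrAC ler_pdivlMr //.
  nra.
split; last exact: hpt.
rewrite /tv_uniform.
have [hT0|hTp] := eqVneq #|T| 0%N.
  rewrite big1; first by rewrite mulr0; nra.
  move=> v _; have : (0 < #|T|)%N by apply/card_gt0P; exists v.
  by rewrite hT0.
have hn0 : 0 < n by rewrite ltr0n lt0n.
have hdab : 0 <= delta * (a + b) by apply: mulr_ge0; lra.
have hN : (1 - delta) * n <= N by rewrite /N hn; lra.
have hN0 : 0 < N.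
  have : 0 < (1 - delta) * n by apply: mulr_gt0 => //; lra.
  lra.
have hsum : \sum_v sample_prob e L0 lbar rs0 v = 1.
  rewrite (eq_bigr (fun v => (v \in L0)%:R * (a/N*a^-1) + (v \in L1 e L0)%:R * (b/N*b^-1)
     + lbar/N * (f e L0 rs0 v / \sum_u f e L0 rs0 u))); last first.
    move=> v _; rewrite sampleE /= -/a -/b -/N.
    congr (_ + _ * _); rewrite /N; field; by rewrite gt_eqF.
  rewrite !big_split /= !aux_sum !aux_div -mulr_sumr.
  have -> : lbar / N * \sum_v (f e L0 rs0 v / \sum_u f e L0 rs0 u) = lbar / N.
    have [hm|hm] := eqVneq #|Lge2 e L0| 0%N.
      have hl0 : lbar = 0.
        move: hl1 hl2; rewrite -/m /m hm mulr0 => ? ?; lra.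
      by rewrite hl0 !mul0r.
    have hmp : 0 < m by rewrite ltr0n lt0n.
    have hgp : 0 < g by nra.
    have [x0 hx0] : exists x0, x0 \in G e L0 rs0.
      by apply/card_gt0P; rewrite -(ltr0n R).
    by rewrite (q_sum hr0 hx0) mulr1.
  rewrite /N; field; by rewrite gt_eqF.
have hc0 : 0 <= (B - 1) / n.
  apply: divr_ge0; last exact: ltW.
  rewrite /B; have := sqr_ge0 (eps + delta); lra.
have hc : forall v, `|sample_prob e L0 lbar rs0 v - n^-1| + (sample_prob e L0 lbar rs0 v - n^-1)
     <= 2 * ((B - 1) / n).
  move=> v; have h := hpt v.
  have h' : sample_prob e L0 lbar rs0 v - n^-1 <= (B - 1) / n by rewrite mulrBl mul1r; lra.
  have [hx|hx] := leP 0 (sample_prob e L0 lbar rs0 v - n^-1).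
    rewrite ger0_norm //; lra.
  rewrite ltr0_norm //; lra.
have E1 : \sum_v `|sample_prob e L0 lbar rs0 v - n^-1| =
   \sum_v (`|sample_prob e L0 lbar rs0 v - n^-1| + (sample_prob e L0 lbar rs0 v - n^-1))
   - (\sum_v sample_prob e L0 lbar rs0 v - \sum_(v : T) n^-1).
  by rewrite big_split /= sumrB addrK.
have hU : \sum_(v : T) n^-1 = 1 by rewrite sumr_const -mulr_natr -/n mulVf // gt_eqF.
have hS2 : \sum_v (`|sample_prob e L0 lbar rs0 v - n^-1| + (sample_prob e L0 lbar rs0 v - n^-1))
   <= 2 * (B - 1).
  apply: le_trans (_ : \sum_(v : T) 2 * ((B - 1) / n) <= _).
    by apply: ler_sum => v _; exact: hc v.
  rewrite sumr_const -mulr_natr -/n le_eqVlt; apply/orP; left; apply/eqP.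
  field; by rewrite gt_eqF.
rewrite E1 hsum hU subrr subr0.
rewrite /B in hS2; lra.
Qed.
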